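(* Let $G=(V,E)$ be a finite, undirected, connected graph with unit edge weights and vertex set $V=\{v_1,\dots,v_N\}$, let $L=D-A$ be its graph Laplacian, and let $\phi_{\lambda_1},\dots,\phi_{\lambda_N}$ be an orthonormal basis of $\mathbb{C}^N$ of eigenvectors of $L$ (with eigenvalues $\lambda_1,\dots,\lambda_N$). For $t\ge 0$ let $H_t=e^{-tL}$, and define the graph short-time Fourier transform $V_t:\mathbb{C}^N\to\mathbb{C}^{N\times N}$ by $$(V_tf)(v_i,\lambda_j)=\sum_{k=1}^N f(v_k)\,H_t(v_i,v_k)\,\overline{\phi_{\lambda_j}(v_k)}.$$ Define $W_t:\mathbb{C}^{N\times N}\to\mathbb{C}^N$ by $$(W_tF)(v_i)=\frac{1}{\|H_t(\cdot,v_i)\|^2}\sum_{j=1}^N\phi_{\lambda_j}(v_i)\Big[\sum_{k=1}^N F(v_k,\lambda_j)\,H_t(v_k,v_i)\Big].$$ Then $W_t$ is a left inverse of $V_t$, i.e. $W_tV_tf=f$ for all $f\in\mathbb{C}^N$.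
   Context: The graph Laplacian acts by $Lf(v)=\sum_{u\sim v}(f(v)-f(u))$; in matrix form $L=D-A$ with $A$ the adjacency matrix and $D$ the diagonal degree matrix. Vectors in $\mathbb{C}^N$ are functions on $V$; $\phi_{\lambda_j}(v_k)$ is the $v_k$-entry of $\phi_{\lambda_j}$; $H_t(v_i,v_k)$ is the $(i,k)$ entry of $H_t$ and $H_t(\cdot,v_i)$ its $i$-th column. Elements $F\in\mathbb{C}^{N\times N}$ are indexed as $F(v_k,\lambda_j)$, $k,j\in\{1,\dots,N\}$. *)

(* Defs.v *)
From mathcomp Require Import all_boot all_order all_algebra.
From mathcomp Require Import all_classical all_reals all_analysis.
From mathcomp Require Export complex.
Set Implicit Arguments. Unset Strict Implicit. Unset Printing Implicit Defensive.
Import Order.TTheory GRing.Theory Num.Theory.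
Import numFieldNormedType.Exports.
Local Open Scope ring_scope.

(* A finite undirected simple graph on vertex set V = 'I_N = {v_1..v_N},
   given by its adjacency relation e (unit edge weights). *)
Definition simple_graph (N : nat) (e : rel 'I_N) : Prop :=
  symmetric e /\ irreflexive e.

Definition connected_graph (N : nat) (e : rel 'I_N) : Prop :=
  forall x y : 'I_N, connect e x y.

Definition deg (N : nat) (e : rel 'I_N) (i : 'I_N) : nat := #|[set k | e i k]|.

Definition laplacian (R : pzRingType) (N : nat) (e : rel 'I_N) : 'M[R]_N :=
  \matrix_(i, j) ((i == j)%:R * (deg e i)%:R - (e i j)%:R).

Definition mxpow (R : pzRingType) (N : nat) (A : 'M[R]_N) (n : nat) : 'M[R]_N :=
  iter n (mulmx A) 1%:M.

Definition mxexp (R : realType) (N : nat) (A : 'M[R]_N) : 'M[R]_N :=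
  \matrix_(i, k) limn (series (fun n => (n`!%:R)^-1 * mxpow A n i k : R)).

Definition heat_kernel (R : realType) (N : nat) (e : rel 'I_N) (t : R)
  : 'M[R[i]]_N :=
  map_mx (fun x : R => (x%:C)%C) (mxexp ((- t) *: laplacian R e)).

(* graph short-time Fourier transform; Phi's j-th column is phi_{lambda_j},
   so Phi k j = phi_{lambda_j}(v_k); (V_t f)(v_i, lambda_j) = result i j *)
Definition gSTFT (R : realType) (N : nat) (e : rel 'I_N) (t : R)
  (Phi : 'M[R[i]]_N) (f : 'I_N -> R[i]) : 'M[R[i]]_N :=
  \matrix_(i, j) \sum_(k < N) f k * heat_kernel e t i k * (Phi k j)^*.

(* W_t F ; F k j = F(v_k, lambda_j) *)
Definition gISTFT (R : realType) (N : nat) (e : rel 'I_N) (t : R)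
  (Phi : 'M[R[i]]_N) (F : 'M[R[i]]_N) : 'I_N -> R[i] :=
  fun i => (\sum_(k < N) `|heat_kernel e t k i| ^+ 2)^-1 *
    \sum_(j < N) Phi i j * (\sum_(k < N) F k j * heat_kernel e t k i).

(* Main.v *)
Require Import Defs.
From mathcomp Require Import all_boot all_order all_algebra.
From mathcomp Require Import all_classical all_reals all_analysis.
From mathcomp Require Import complex.
From mathcomp Require Import ring.
Import Order.TTheory GRing.Theory Num.Theory.
Import numFieldNormedType.Exports.
Local Open Scope ring_scope.

Section S.
Variables (R : realType) (N : nat) (Phi : 'M[R[i]]_N).
Local Notation Phis := (map_mx (@conjc R) Phi^T).
Hypothesis Horth : forall j j' : 'I_N, \sum_(k < N) (Phi k j)^*%C * Phi k j' = (j == j')%:R.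

Lemma orth_l : Phis *m Phi = 1%:M.
Proof.
apply/matrixP => j j'; rewrite !mxE -Horth; apply: eq_bigr => k _; by rewrite !mxE.
Qed.

Lemma orth_r : Phi *m Phis = 1%:M.
Proof. exact: mulmx1C orth_l. Qed.

Lemma orth_r_entry (i m : 'I_N) : \sum_(j < N) Phi i j * (Phi m j)^*%C = (i == m)%:R.
Proof.
have := congr1 (fun M : 'M[R[i]]_N => M i m) orth_r; rewrite !mxE => <-.
by apply: eq_bigr => j _; rewrite !mxE.
Qed.

Lemma mxpow_diag (c : R[i]) (A : 'M[R[i]]_N) (d : 'rV[R[i]]_N) :
  A *m Phi = Phi *m diag_mx d ->
  forall n, mxpow (c *: A) n = Phi *m diag_mx (\row_j (c * d 0 j) ^+ n) *m Phis.
Proof.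
move=> HA; elim=> [|n IH].
  rewrite /mxpow /=.
  have -> : (\row_j (c * d 0 j) ^+ 0) = const_mx 1 by apply/matrixP => a b; rewrite !mxE expr0.
  by rewrite diag_const_mx mulmx1 orth_r.
rewrite /mxpow /= -/(mxpow _ n) IH.
rewrite -scalemxAl !mulmxA HA.
rewrite -[Phi *m diag_mx d *m _]mulmxA mulmx_diag scalemxAl.
rewrite scalemxAr; congr (_ *m _ *m _).
apply/matrixP => a b; rewrite !mxE; case: (a == b); rewrite /= ?mulr1n ?mulr0n ?mulr0 //.
by rewrite exprS mulrA.
Qed.


Lemma eig_diag (A : 'M[R[i]]_N) (lam : 'I_N -> R[i]) :
  (forall j, A *m col j Phi = lam j *: col j Phi) ->
  A *m Phi = Phi *m diag_mx (\row_j lam j).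
Proof.
move=> H; rewrite mul_mx_diag; apply/matrixP => k j.
have := congr1 (fun M : 'M[R[i]]_(N,1) => M k 0) (H j); rewrite !mxE => E.
rewrite mulrC -E; apply: eq_bigr => m _; by rewrite !mxE.
Qed.

Lemma lam_real (A : 'M[R[i]]_N) (lam : 'I_N -> R[i]) :
  map_mx (@conjc R) A^T = A ->
  A *m Phi = Phi *m diag_mx (\row_j lam j) ->
  forall j, (lam j)^*%C = lam j.
Proof.
move=> HA HE j.
have EM : Phis *m A *m Phi = diag_mx (\row_j lam j).
  by rewrite -mulmxA HE mulmxA orth_l mul1mx.
have : map_mx (@conjc R) (Phis *m A *m Phi)^T = Phis *m A *m Phi.
  rewrite !trmx_mul !map_mxM HA mulmxA; congr (_ *m _ *m _).
  by apply/matrixP => a b; rewrite !mxE /= conjcK.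
rewrite -!mulmxA HE !mulmxA orth_l mul1mx => /(congr1 (fun M : 'M[R[i]]_N => M j j)); rewrite !mxE eqxx /= !mulr1n.
by [].
Qed.

End S.

Lemma map_mxpow (R : realType) (N : nat) (A : 'M[R]_N) n :
  map_mx (real_complex R) (mxpow A n) = mxpow (map_mx (real_complex R) A) n.
Proof.
elim: n => [|n IH]; first by rewrite /mxpow /= map_mx1.
by rewrite /mxpow /= map_mxM -/(mxpow _ n) IH.
Qed.

Lemma lap_sym (R : realType) (N : nat) (e : rel 'I_N) : symmetric e ->
  map_mx (@conjc R) (map_mx (real_complex R) (laplacian R e))^T =
  map_mx (real_complex R) (laplacian R e).
Proof.
move=> He; apply/matrixP => a b; rewrite !mxE conjc_real He.
by case: (eqVneq a b) => [->|nab] //; rewrite !mul0r.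
Qed.


Lemma real_of_conj (R : realType) (z : R[i]) : (z^*)%C = z -> z = ((complex.Re z)%:C)%C.
Proof.
case: z => a b /= [] Hb; congr (_ +i* _)%C.
have : b + b = 0 by rewrite -{1}Hb addNr.
by rewrite -mulr2n -mulr_natr => /eqP; rewrite mulf_eq0 pnatr_eq0 orbF => /eqP.
Qed.

Lemma lim_sum_exp (R : realType) (N : nat) (w x : 'I_N -> R) :
  limn (series (fun n => (n`!%:R)^-1 * \sum_(j < N) w j * x j ^+ n)) =
  \sum_(j < N) w j * expR (x j).
Proof.
apply: cvg_lim => //.
have -> : series (fun n => (n`!%:R)^-1 * \sum_(j < N) w j * x j ^+ n) =
   (fun n => \sum_(j < N) w j * series (exp_coeff (x j)) n).
  apply/funext => n; rewrite /series /=.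
  under eq_bigr do rewrite mulr_sumr.
  rewrite exchange_big /=; apply: eq_bigr => j _; rewrite mulr_sumr; apply: eq_bigr => k _.
  by rewrite /exp_coeff /= mulrCA [_^-1 * _]mulrC.
apply: cvg_big => //.
  exact: add_continuous.
move=> j _; apply: cvgMl_tmp.
exact: is_cvg_series_exp_coeff.
Qed.

Theorem theorem3p3 (R : realType) (N : nat) (e : rel 'I_N)
  (Phi : 'M[R[i]]_N) (lam : 'I_N -> R[i]) (t : R) :
  simple_graph e ->
  connected_graph e ->
  (* columns of Phi form an orthonormal basis of C^N *)
  (forall j j' : 'I_N, \sum_(k < N) (Phi k j)^* * Phi k j' = (j == j')%:R) ->
  (* column j of Phi is an eigenvector of L with eigenvalue lam j *)
  (forall j : 'I_N,
     map_mx (fun x : R => (x%:C)%C) (laplacian R e) *m col j Phi = lam j *: col j Phi) ->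
  0 <= t ->
  forall f : 'I_N -> R[i], forall i : 'I_N,
    gISTFT e t Phi (gSTFT e t Phi f) i = f i.
Proof.
move=> [Hsym _] _ Horth Heig _ f i.
set L := laplacian R e.
have Heig' : forall j, map_mx (real_complex R) L *m col j Phi = lam j *: col j Phi := Heig.
have HE := @eig_diag _ _ _ _ _ Heig'.
have Hlam : forall j, lam j = ((complex.Re (lam j))%:C)%C :=
  fun j => @real_of_conj _ _ (@lam_real _ _ _ Horth _ _ (@lap_sym _ _ _ Hsym) HE j).
set Hr := mxexp ((-t) *: L).
pose w j := complex.Re (Phi i j) ^+ 2 + complex.Im (Phi i j) ^+ 2.
pose x j := - t * complex.Re (lam j).
have Hlam' : forall j, ((-t)%:C)%C * lam j = ((x j)%:C)%C.
  by move=> j; rewrite {1}(Hlam j) -rmorphM.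
have Hw : forall j, ((w j)%:C)%C = Phi i j * (Phi i j)^*%C.
  by move=> j; rewrite add_Re2_Im2 sqr_normc.
have Hii : Hr i i = \sum_(j < N) w j * expR (x j).
  rewrite /Hr /mxexp mxE -lim_sum_exp; congr (limn (series _)); apply/funext => n.
  congr (_ * _); apply: complexI.
  have := congr1 (fun M : 'M[R[i]]_N => M i i) (@map_mxpow _ _ ((-t) *: L) n).
  rewrite mxE => ->.
  rewrite map_mxZ (@mxpow_diag _ _ _ Horth _ _ _ HE n) mul_mx_diag mxE rmorph_sum.
  apply: eq_bigr => j _; rewrite !mxE Hlam'.
  transitivity (((w j)%:C)%C * ((x j)%:C)%C ^+ n); last by rewrite -rmorphXn -rmorphM.
  by rewrite Hw mulrAC.
have w_ge0 : forall j, 0 <= w j by move=> j; rewrite addr_ge0 // sqr_ge0.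
have sw : \sum_(j < N) w j = 1.
  apply: complexI; rewrite rmorph_sum rmorph1 /=.
  have := @orth_r_entry _ _ _ Horth i i; rewrite eqxx /= => E.
  transitivity (\sum_(j < N) Phi i j * (Phi i j)^*%C); last exact: E.
  by apply: eq_bigr => j _; rewrite Hw.
have Hpos : Hr i i != 0.
  rewrite Hii; apply/eqP => H0.
  have Z := psumr_eq0P (fun j _ => mulr_ge0 (w_ge0 j) (expR_ge0 (x j))) H0.
  move: sw; rewrite big1 => [/eqP|j _]; first by rewrite eq_sym oner_eq0.
  by have /eqP := Z j isT; rewrite mulf_eq0 expR_eq0 orbF => /eqP.
have HK : forall a b, heat_kernel e t a b = ((Hr a b)%:C)%C.
  by move=> a b; rewrite /heat_kernel mxE.
rewrite /gISTFT /gSTFT.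
set s := \sum_(k < N) _.
have Hs : s != 0.
  apply/eqP => H0.
  have Z := psumr_eq0P (fun k _ => exprn_ge0 2 (normr_ge0 (heat_kernel e t k i))) H0.
  have /eqP := Z i isT; rewrite expf_eq0 /= normr_eq0 HK => /eqP [] H1.
  by move: Hpos; rewrite H1 eqxx.
set H := heat_kernel e t.
have num : \sum_(j < N) Phi i j * \sum_(k < N)
    (\matrix_(i0, j0) \sum_(k0 < N) f k0 * H i0 k0 * (Phi k0 j0)^*%C) k j * H k i
    = f i * s.
  under eq_bigr do under eq_bigr do rewrite mxE.
  transitivity (\sum_(k < N) \sum_(m < N) f m * H k m * H k i *
                  \sum_(j < N) Phi i j * (Phi m j)^*%C).
    under eq_bigr => j _ do (rewrite mulr_sumr; under eq_bigr do rewrite mulr_suml mulr_sumr).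
    under [RHS]eq_bigr do under eq_bigr do rewrite mulr_sumr.
    rewrite exchange_big /=; apply: eq_bigr => k _; rewrite exchange_big /=.
    apply: eq_bigr => m _; apply: eq_bigr => j _; ring.
  under eq_bigr do under eq_bigr do rewrite (@orth_r_entry _ _ _ Horth).
  rewrite /s mulr_sumr; apply: eq_bigr => k _.
  rewrite (bigD1 i) //= eqxx mulr1 big1 ?addr0; last first.
    by move=> m; rewrite eq_sym => /negbTE ->; rewrite mulr0.
  by rewrite /H HK sqr_normc conjc_real -mulrA.
by rewrite num mulrCA mulVf // mulr1.
Qed.
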